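(* Let $k_1,\dots,k_{10}$ be smooth functions of $(t,r)$ (the coefficients of a spherically symmetric torsion-free connection with $k_{11}=k_{12}=0$, as in the context), and assume $k_{10}\neq0$. Then the following statements are equivalent: 1. $A=B=C=D=E=F=0$; 2. $[\delta_t,\delta_r]=\alpha\,\delta_w$ for some function $\alpha$ (possibly depending on $(t,r,\dot t,\dot r,w)$), where either $\alpha=0$ or $b=c=0$.
   Context: Coordinates $(t,r,\theta,\phi)$ on a 4-dimensional chart domain, induced velocity coordinates, $w^2=\dot\theta^2+\sin^2\theta\,\dot\phi^2$. The connection has nonzero coefficients $\Gamma^t_{tt}=k_1$, $\Gamma^t_{tr}=k_2$, $\Gamma^t_{rr}=k_3$, $\Gamma^r_{tt}=k_4$, $\Gamma^r_{rr}=k_5$, $\Gamma^r_{tr}=k_6$, $\Gamma^t_{\theta\theta}=k_7$, $\Gamma^t_{\phi\phi}=k_7\sin^2\theta$, $\Gamma^\theta_{\theta t}=\Gamma^\phi_{\phi t}=k_8$, $\Gamma^\theta_{\theta r}=\Gamma^\phi_{\phi r}=k_9$, $\Gamma^r_{\theta\theta}=k_{10}$, $\Gamma^r_{\phi\phi}=k_{10}\sin^2\theta$, $\Gamma^\phi_{\theta\phi}=\cot\theta$, $\Gamma^\theta_{\phi\phi}=-\sin\theta\cos\theta$ (symmetric in lower indices). Vector fields in the variables $(t,r,\dot t,\dot r,w)$: $\delta_t=\partial_t-(k_1\dot t+k_2\dot r)\dot\partial_t-(k_4\dot t+k_6\dot r)\dot\partial_r-k_8w\partial_w$, $\delta_r=\partial_r-(k_2\dot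 t+k_3\dot r)\dot\partial_t-(k_6\dot t+k_5\dot r)\dot\partial_r-k_9w\partial_w$, $\delta_w=wk_7\dot\partial_t+wk_{10}\dot\partial_r+(k_8\dot t+k_9\dot r)\partial_w$. Coefficients (subscripts ${}_{,t},{}_{,r}$ denote partial derivatives): $a_1=k_{1,r}-k_{2,t}+k_3k_4-k_2k_6$, $a_2=k_{2,r}-k_{3,t}+k_2^2+k_3k_6-k_1k_3-k_2k_5$, $a_3=k_{4,r}-k_{6,t}+k_1k_6+k_4k_5-k_2k_4-k_6^2$, $a_4=k_{6,r}-k_{5,t}+k_2k_6-k_3k_4$, $a_5=k_{8,r}-k_{9,t}$. Set $a=k_7/k_{10}$, $b=k_8/k_{10}$, $c=(k_9k_{10}-k_7k_8)/k_{10}^2$ and $A=b(aa_1+a_2)+(ab+c)(aa_3+a_4)-a_5(2ab+c)$, $B=a(aa_3+a_4)-(aa_1+a_2)$, $C=(ab+c)a_3+b(aa_3+a_4)+b(a_1-2a_5)$, $D=aa_3-a_1+a_5$, $E=ba_3$, $F=aa_3-a_1$. *)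

(* Defs.v *)
From Stdlib Require Import Reals.
From Coquelicot Require Import Coquelicot.
Open Scope R_scope.

Definition d_t (f : R -> R -> R) (t r : R) : R := Derive (fun s => f s r) t.
Definition d_r (f : R -> R -> R) (t r : R) : R := Derive (fun s => f t s) r.

Fixpoint Ck_on (n : nat) (U : R * R -> Prop) (f : R -> R -> R) : Prop :=
  match n with
  | O => forall t r, U (t, r) ->
           continuous (fun p : R * R => f (fst p) (snd p)) (t, r)
  | S m => (forall t r, U (t, r) ->
              continuous (fun p : R * R => f (fst p) (snd p)) (t, r)
              /\ ex_derive (fun s => f s r) t /\ ex_derive (fun s => f t s) r)
           /\ Ck_on m U (d_t f) /\ Ck_on m U (d_r f)
  end.

Definition smooth_on (U : R * R -> Prop) (f : R -> R -> R) : Prop :=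
  forall n, Ck_on n U f.

Record coeffs := mkCoeffs {
  k1 : R -> R -> R; k2 : R -> R -> R; k3 : R -> R -> R; k4 : R -> R -> R;
  k5 : R -> R -> R; k6 : R -> R -> R; k7 : R -> R -> R; k8 : R -> R -> R;
  k9 : R -> R -> R; k10 : R -> R -> R }.

Definition coeffs_smooth (U : R * R -> Prop) (K : coeffs) : Prop :=
  smooth_on U (k1 K) /\ smooth_on U (k2 K) /\ smooth_on U (k3 K) /\
  smooth_on U (k4 K) /\ smooth_on U (k5 K) /\ smooth_on U (k6 K) /\
  smooth_on U (k7 K) /\ smooth_on U (k8 K) /\ smooth_on U (k9 K) /\
  smooth_on U (k10 K).

Section Coefs.
Variable K : coeffs.
Variables t r : R.
Let K1 := k1 K t r. Let K2 := k2 K t r. Let K3 := k3 K t r. Let K4 := k4 K t r.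
Let K5 := k5 K t r. Let K6 := k6 K t r. Let K7 := k7 K t r. Let K8 := k8 K t r.
Let K9 := k9 K t r. Let K10 := k10 K t r.

Definition a1 := d_r (k1 K) t r - d_t (k2 K) t r + K3 * K4 - K2 * K6.
Definition a2 := d_r (k2 K) t r - d_t (k3 K) t r + K2 ^ 2 + K3 * K6 - K1 * K3 - K2 * K5.
Definition a3 := d_r (k4 K) t r - d_t (k6 K) t r + K1 * K6 + K4 * K5 - K2 * K4 - K6 ^ 2.
Definition a4 := d_r (k6 K) t r - d_t (k5 K) t r + K2 * K6 - K3 * K4.
Definition a5 := d_r (k8 K) t r - d_t (k9 K) t r.

Definition ca := K7 / K10.
Definition cb := K8 / K10.
Definition cc := (K9 * K10 - K7 * K8) / K10 ^ 2.

Definition cA := cb * (ca * a1 + a2) + (ca * cb + cc) * (ca * a3 + a4)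
                 - a5 * (2 * ca * cb + cc).
Definition cB := ca * (ca * a3 + a4) - (ca * a1 + a2).
Definition cC := (ca * cb + cc) * a3 + cb * (ca * a3 + a4) + cb * (a1 - 2 * a5).
Definition cD := ca * a3 - a1 + a5.
Definition cE := cb * a3.
Definition cF := ca * a3 - a1.
End Coefs.

(* scalar fields: functions of (t, r, tdot, rdot, w) *)
Definition SF := R -> R -> R -> R -> R -> R.

Record VF := mkVF { vt : SF; vr : SF; vtd : SF; vrd : SF; vw : SF }.

Definition pd_t (f : SF) : SF := fun t r x y w => Derive (fun s => f s r x y w) t.
Definition pd_r (f : SF) : SF := fun t r x y w => Derive (fun s => f t s x y w) r.
Definition pd_td (f : SF) : SF := fun t r x y w => Derive (fun s => f t r s y w) x.
Definition pd_rd (f : SF) : SF := fun t r x y w => Derive (fun s => f t r x s w) y.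
Definition pd_w (f : SF) : SF := fun t r x y w => Derive (fun s => f t r x y s) w.

Definition vf_apply (X : VF) (f : SF) : SF := fun t r x y w =>
  vt X t r x y w * pd_t f t r x y w + vr X t r x y w * pd_r f t r x y w
  + vtd X t r x y w * pd_td f t r x y w + vrd X t r x y w * pd_rd f t r x y w
  + vw X t r x y w * pd_w f t r x y w.

Definition bracket (X Y : VF) : VF :=
  mkVF (fun t r x y w => vf_apply X (vt Y) t r x y w - vf_apply Y (vt X) t r x y w)
       (fun t r x y w => vf_apply X (vr Y) t r x y w - vf_apply Y (vr X) t r x y w)
       (fun t r x y w => vf_apply X (vtd Y) t r x y w - vf_apply Y (vtd X) t r x y w)
       (fun t r x y w => vf_apply X (vrd Y) t r x y w - vf_apply Y (vrd X) t r x y w)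
       (fun t r x y w => vf_apply X (vw Y) t r x y w - vf_apply Y (vw X) t r x y w).

Definition scale (al : SF) (X : VF) : VF :=
  mkVF (fun t r x y w => al t r x y w * vt X t r x y w)
       (fun t r x y w => al t r x y w * vr X t r x y w)
       (fun t r x y w => al t r x y w * vtd X t r x y w)
       (fun t r x y w => al t r x y w * vrd X t r x y w)
       (fun t r x y w => al t r x y w * vw X t r x y w).

Definition VF_eq_on (D : R -> R -> R -> R -> R -> Prop) (X Y : VF) : Prop :=
  forall t r x y w, D t r x y w ->
    vt X t r x y w = vt Y t r x y w /\ vr X t r x y w = vr Y t r x y w /\
    vtd X t r x y w = vtd Y t r x y w /\ vrd X t r x y w = vrd Y t r x y w /\
    vw X t r x y w = vw Y t r x y w.

(* x = tdot, y = rdot *)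
Definition delta_t (K : coeffs) : VF :=
  mkVF (fun _ _ _ _ _ => 1) (fun _ _ _ _ _ => 0)
       (fun t r x y w => - (k1 K t r * x + k2 K t r * y))
       (fun t r x y w => - (k4 K t r * x + k6 K t r * y))
       (fun t r x y w => - (k8 K t r * w)).

Definition delta_r (K : coeffs) : VF :=
  mkVF (fun _ _ _ _ _ => 0) (fun _ _ _ _ _ => 1)
       (fun t r x y w => - (k2 K t r * x + k3 K t r * y))
       (fun t r x y w => - (k6 K t r * x + k5 K t r * y))
       (fun t r x y w => - (k9 K t r * w)).

Definition delta_w (K : coeffs) : VF :=
  mkVF (fun _ _ _ _ _ => 0) (fun _ _ _ _ _ => 0)
       (fun t r x y w => w * k7 K t r)
       (fun t r x y w => w * k10 K t r)
       (fun t r x y w => k8 K t r * x + k9 K t r * y).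

(* Main.v *)
Require Import Defs.
From Stdlib Require Import Reals Lra.
From Coquelicot Require Import Coquelicot.
Open Scope R_scope.

Definition P6 (a b c a1 a2 a3 a4 a5 : R) :=
  a1 = a*a3 /\ a2 = a*a4 /\ a5 = 0 /\ b*a3 = 0 /\ (c+a*b)*a4 = 0 /\ (c+a*b)*a3 + b*a4 = 0.

Lemma alg_cases a b c a1 a2 a3 a4 a5 : P6 a b c a1 a2 a3 a4 a5 ->
  (a3 = 0 /\ a4 = 0) \/ (b = 0 /\ c = 0).
Proof.
  intros (H1&H2&H3&H4&H5&H6).
  destruct (Rmult_integral _ _ H4) as [Hb|Ha3].
  - subst b. rewrite Rmult_0_r, Rplus_0_r in H5, H6. rewrite Rmult_0_l, Rplus_0_r in H6.
    destruct (Rmult_integral _ _ H5) as [Hc|Ha4]; [right; lra|].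
    destruct (Rmult_integral _ _ H6) as [Hc|Ha3]; [right; lra|left; lra].
  - subst a3. rewrite Rmult_0_r, Rplus_0_l in H6.
    destruct (Rmult_integral _ _ H6) as [Hb|Ha4].
    + subst b. rewrite Rmult_0_r, Rplus_0_r in H5.
      destruct (Rmult_integral _ _ H5) as [Hc|Ha4]; [right; lra|left; lra].
    + left; lra.
Qed.

Lemma alg_from a b c a1 a2 a3 a4 a5 : P6 a b c a1 a2 a3 a4 a5 ->
  b * (a * a1 + a2) + (a * b + c) * (a * a3 + a4) - a5 * (2 * a * b + c) = 0 /\
  a * (a * a3 + a4) - (a * a1 + a2) = 0 /\
  (a * b + c) * a3 + b * (a * a3 + a4) + b * (a1 - 2 * a5) = 0 /\
  a * a3 - a1 + a5 = 0 /\ b * a3 = 0 /\ a * a3 - a1 = 0.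
Proof.
  intros HP. destruct (alg_cases _ _ _ _ _ _ _ _ HP) as [[-> ->]|[-> ->]];
  destruct HP as (->&->&->&_); repeat split; ring.
Qed.

Lemma alg_to a b c a1 a2 a3 a4 a5 :
  b * (a * a1 + a2) + (a * b + c) * (a * a3 + a4) - a5 * (2 * a * b + c) = 0 ->
  a * (a * a3 + a4) - (a * a1 + a2) = 0 ->
  (a * b + c) * a3 + b * (a * a3 + a4) + b * (a1 - 2 * a5) = 0 ->
  a * a3 - a1 + a5 = 0 -> b * a3 = 0 -> a * a3 - a1 = 0 ->
  P6 a b c a1 a2 a3 a4 a5.
Proof.
  intros HA HB HC HD HE HF.
  assert (e1 : a1 = a*a3) by lra. assert (e5 : a5 = 0) by lra.
  subst a1 a5. assert (e2 : a2 = a*a4) by lra. subst a2.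
  destruct (Rmult_integral _ _ HE) as [Hb|Ha3].
  - subst b. assert (H1 : c*a3 = 0) by lra. assert (H2 : c*(a*a3+a4) = 0) by lra.
    assert (H3 : c*a4 = 0) by (replace (c*a4) with (c*(a*a3+a4) - a*(c*a3)) by ring; rewrite H1, H2; ring).
    repeat split; ring_simplify; try rewrite H3; try rewrite H1; ring.
  - subst a3. assert (b*a4 = 0) by lra.
    destruct (Rmult_integral _ _ H) as [Hb|Ha4].
    + subst b. assert (c*a4 = 0) by nra. repeat split; try ring; nra.
    + subst a4. repeat split; ring.
Qed.
Lemma fwd k7 k8 k9 k10 a1 a2 a3 a4 a5 x y w : k10 <> 0 -> 0 < w ->
  P6 (k7/k10) (k8/k10) ((k9*k10 - k7*k8)/k10^2) a1 a2 a3 a4 a5 ->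
  a1*x+a2*y = (a3*x+a4*y)/(w*k10) * (w*k7) /\
  a3*x+a4*y = (a3*x+a4*y)/(w*k10) * (w*k10) /\
  a5*w = (a3*x+a4*y)/(w*k10) * (k8*x+k9*y) /\
  ((a3*x+a4*y)/(w*k10) = 0 \/ (k8/k10 = 0 /\ (k9*k10 - k7*k8)/k10^2 = 0)).
Proof.
  intros H10 Hw HP.
  assert (Hw' : w <> 0) by lra.
  destruct (alg_cases _ _ _ _ _ _ _ _ HP) as [[e3 e4]|[eb ec]];
  destruct HP as (e1&e2&e5&_); subst a1 a2 a5.
  - subst a3 a4. assert (Z : (0*x+0*y)/(w*k10) = 0) by (field; auto).
    rewrite Z. repeat split; try left; ring.
  - assert (h8 : k8 = 0).
    { replace k8 with (k8/k10*k10) by (field; auto). rewrite eb; ring. }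
    subst k8.
    assert (h9 : k9 = 0).
    { replace k9 with ((k9 * k10 - k7 * 0) / k10 ^ 2 * k10) by (field; auto). rewrite ec; ring. }
    subst k9.
    repeat split; [field; auto | field; auto | ring | right; split; assumption].
Qed.

Lemma bwd k7 k8 k9 k10 a1 a2 a3 a4 a5 p q s u : k10 <> 0 ->
  a1*1+a2*0 = p*(1*k7) -> a3*1+a4*0 = p*(1*k10) -> a5*1 = p*(k8*1+k9*0) ->
  a1*0+a2*1 = q*(1*k7) -> a3*0+a4*1 = q*(1*k10) -> a5*1 = q*(k8*0+k9*1) ->
  a5*1 = s*(k8*0+k9*0) ->
  a3*1+a4*1 = u*(1*k10) -> a5*1 = u*(k8*1+k9*1) ->
  P6 (k7/k10) (k8/k10) ((k9*k10 - k7*k8)/k10^2) a1 a2 a3 a4 a5.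
Proof.
  intros H10 h1 h2 h3 h4 h5 h6 h7 h8 h9.
  assert (e5 : a5 = 0) by lra. subst a5.
  assert (e1 : a1 = p*k7) by lra. assert (e3 : a3 = p*k10) by lra.
  assert (e2 : a2 = q*k7) by lra. assert (e4 : a4 = q*k10) by lra.
  subst a1 a2 a3 a4.
  assert (pk8 : p*k8 = 0) by lra. assert (qk9 : q*k9 = 0) by lra.
  assert (eu : u = p + q).
  { apply (Rmult_eq_reg_r k10); auto. lra. }
  subst u.
  assert (m : p*k9 + q*k8 = 0).
  { replace (p*k9+q*k8) with ((p+q)*(k8+k9) - p*k8 - q*k9) by ring. lra. }
  unfold P6. repeat split.
  - field; auto.
  - field; auto.
  - replace (k8 / k10 * (p * k10)) with (p*k8) by (field; auto). exact pk8.
  - replace (((k9 * k10 - k7 * k8) / k10 ^ 2 + k7 / k10 * (k8 / k10)) * (q * k10))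
      with (q*k9) by (field; auto). exact qk9.
  - replace (((k9 * k10 - k7 * k8) / k10 ^ 2 + k7 / k10 * (k8 / k10)) * (p * k10) +
              k8 / k10 * (q * k10)) with (p*k9 + q*k8) by (field; auto). exact m.
Qed.
Lemma D1 (f g : R -> R) x y t : ex_derive f t -> ex_derive g t ->
  Derive (fun s => -(f s * x + g s * y)) t = -(Derive f t * x + Derive g t * y).
Proof. intros Hf Hg. apply is_derive_unique. auto_derive; [repeat split; assumption | first [ring | rewrite ?Rmult_1_l, ?Rmult_1_r; reflexivity]]. Qed.
Lemma D2 (f : R -> R) w t : ex_derive f t ->
  Derive (fun s => -(f s * w)) t = -(Derive f t * w).
Proof. intros Hf. apply is_derive_unique. auto_derive; [repeat split; assumption | first [ring | rewrite ?Rmult_1_l, ?Rmult_1_r; reflexivity]]. Qed.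
Lemma D3 a b y x : Derive (fun s => -(a * s + b * y)) x = - a.
Proof. apply is_derive_unique. auto_derive; [repeat split; assumption | first [ring | rewrite ?Rmult_1_l, ?Rmult_1_r; reflexivity]]. Qed.
Lemma D4 a b y x : Derive (fun s => -(a * y + b * s)) x = - b.
Proof. apply is_derive_unique. auto_derive; [repeat split; assumption | first [ring | rewrite ?Rmult_1_l, ?Rmult_1_r; reflexivity]]. Qed.
Lemma D5 a w : Derive (fun s => -(a * s)) w = - a.
Proof. apply is_derive_unique. auto_derive; [repeat split; assumption | first [ring | rewrite ?Rmult_1_l, ?Rmult_1_r; reflexivity]]. Qed.
Lemma D0 (c x : R) : Derive (fun _ => c) x = 0.
Proof. apply Derive_const. Qed.

Lemma bracket_formula U K t r x y w : coeffs_smooth U K -> U (t, r) ->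
  vt (bracket (delta_t K) (delta_r K)) t r x y w = 0 /\
  vr (bracket (delta_t K) (delta_r K)) t r x y w = 0 /\
  vtd (bracket (delta_t K) (delta_r K)) t r x y w = a1 K t r * x + a2 K t r * y /\
  vrd (bracket (delta_t K) (delta_r K)) t r x y w = a3 K t r * x + a4 K t r * y /\
  vw (bracket (delta_t K) (delta_r K)) t r x y w = a5 K t r * w.
Proof.
  intros HS HU.
  assert (E : forall f, smooth_on U f -> ex_derive (fun s => f s r) t /\ ex_derive (fun s => f t s) r).
  { intros f Hf. destruct (Hf 1%nat) as [H _]. apply H; auto. }
  destruct HS as (S1&S2&S3&S4&S5&S6&S7&S8&S9&S10).
  destruct (E _ S1); destruct (E _ S2); destruct (E _ S3); destruct (E _ S4);
  destruct (E _ S5); destruct (E _ S6); destruct (E _ S8); destruct (E _ S9).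
  unfold bracket, vf_apply, delta_t, delta_r, pd_t, pd_r, pd_td, pd_rd, pd_w; simpl.
  rewrite !D0.
  rewrite !D1, !D2, !D3, !D4, !D5 by auto.
  unfold a1, a2, a3, a4, a5, d_t.
  change (d_r (k1 K) t r) with (Derive (k1 K t) r).
  change (d_r (k2 K) t r) with (Derive (k2 K t) r).
  change (d_r (k4 K) t r) with (Derive (k4 K t) r).
  change (d_r (k6 K) t r) with (Derive (k6 K t) r).
  change (d_r (k8 K) t r) with (Derive (k8 K t) r).
  repeat split; ring.
Qed.

Theorem lemma3 (U : R * R -> Prop) (K : coeffs) :
  open U ->
  coeffs_smooth U K ->
  (forall t r, U (t, r) -> k10 K t r <> 0) ->
  ((forall t r, U (t, r) ->
      cA K t r = 0 /\ cB K t r = 0 /\ cC K t r = 0 /\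
      cD K t r = 0 /\ cE K t r = 0 /\ cF K t r = 0)
   <->
   (exists alpha : SF,
      VF_eq_on (fun t r x y w => U (t, r) /\ 0 < w)
               (bracket (delta_t K) (delta_r K)) (scale alpha (delta_w K))
      /\ (forall t r x y w, U (t, r) -> 0 < w ->
            alpha t r x y w = 0 \/ (cb K t r = 0 /\ cc K t r = 0)))).
Proof.
  intros HO HS H10. split.
  - intros H.
    assert (HP : forall t r, U (t, r) ->
      P6 (k7 K t r / k10 K t r) (k8 K t r / k10 K t r)
         ((k9 K t r * k10 K t r - k7 K t r * k8 K t r) / k10 K t r ^ 2)
         (a1 K t r) (a2 K t r) (a3 K t r) (a4 K t r) (a5 K t r)).
    { intros t r HU. destruct (H t r HU) as (A&B&C&D&E&F).
      apply alg_to; assumption. }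
    exists (fun t r x y w => (a3 K t r * x + a4 K t r * y) / (w * k10 K t r)).
    split.
    + intros t r x y w [HU Hw].
      destruct (bracket_formula U K t r x y w HS HU) as (e1&e2&e3&e4&e5).
      destruct (fwd _ _ _ _ _ _ _ _ _ x y w (H10 t r HU) Hw (HP t r HU)) as (f1&f2&f3&_).
      rewrite e1, e2, e3, e4, e5.
      cbn [vt vr vtd vrd vw scale delta_w].
      repeat split; try ring; assumption.
    + intros t r x y w HU Hw.
      destruct (fwd _ _ _ _ _ _ _ _ _ x y w (H10 t r HU) Hw (HP t r HU)) as (_&_&_&f4).
      exact f4.
  - intros [al [Heq _]] t r HU.
    assert (G : forall x y, 
      a1 K t r * x + a2 K t r * y = al t r x y 1 * (1 * k7 K t r) /\
      a3 K t r * x + a4 K t r * y = al t r x y 1 * (1 * k10 K t r) /\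
      a5 K t r * 1 = al t r x y 1 * (k8 K t r * x + k9 K t r * y)).
    { intros x y.
      destruct (bracket_formula U K t r x y 1 HS HU) as (e1&e2&e3&e4&e5).
      destruct (Heq t r x y 1 (conj HU Rlt_0_1)) as (g1&g2&g3&g4&g5).
      rewrite e3 in g3; rewrite e4 in g4; rewrite e5 in g5.
      cbn [vt vr vtd vrd vw scale delta_w] in g3, g4, g5. auto. }
    destruct (G 1 0) as (h1&h2&h3).
    destruct (G 0 1) as (h4&h5&h6).
    destruct (G 0 0) as (_&_&h7).
    destruct (G 1 1) as (_&h8&h9).
    pose proof (bwd _ _ _ _ _ _ _ _ _ _ _ _ _ (H10 t r HU) h1 h2 h3 h4 h5 h6 h7 h8 h9) as HP.
    exact (alg_from _ _ _ _ _ _ _ _ HP).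
Qed.
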